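(* For every $\varepsilon>0$ there exists $C_\varepsilon\in\mathbb R$, depending only on $\varepsilon$, $\eta$ and $\Gamma$, such that $$\eta(u)\le\varepsilon\,\Gamma(u)+C_\varepsilon\qquad\text{for all }u\in\bar I_p.$$
   Context: $\eta:\mathbb R_+\to\mathbb R_+$ is continuous, $\eta(0)=0$, $\eta(u)>0$ for $u\ne0$, nondecreasing on $\mathbb R_+$, and extended to $\mathbb R$ as an even function. $p\in L^1_{loc}(\mathbb R_+)$ is absolutely continuous and increasing on $(0,\infty)$, $p(u)\to+\infty$ as $u\to+\infty$; if $p(0):=\lim_{u\downarrow0}p(u)$ is finite, $p(u)=2p(0)-p(-u)$ for $u\le0$. $I_p=(0,\infty)$ if $p(0)=-\infty$, $I_p=\mathbb R$ otherwise, with closure $\bar I_p$. $\Gamma(u)=\int_1^u(p(a)-p(1))da$ on $\bar I_p$. Assumption: $\Gamma(u)/\eta(u)\to+\infty$ as $u\to+\infty$. *)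

(* Defs.v *)
From HB Require Import structures.
From mathcomp Require Import all_boot all_order all_algebra.
From mathcomp Require Import all_classical all_reals all_analysis.
Set Implicit Arguments. Unset Strict Implicit. Unset Printing Implicit Defensive.
Import Order.TTheory GRing.Theory Num.Theory.
Import numFieldNormedType.Exports.
Local Open Scope classical_set_scope.
Local Open Scope ring_scope.

Definition abs_cont_on {R : realType} (f : R -> R) (a b : R) : Prop :=
  forall e : R, 0 < e -> exists2 d : R, 0 < d &
    forall (n : nat) (x y : nat -> R),
      (forall i, (i < n)%N -> [/\ a <= x i, x i <= y i & y i <= b]) ->
      (forall i, (i.+1 < n)%N -> y i <= x i.+1) ->
      \sum_(i < n) (y i - x i) < d ->
      \sum_(i < n) `|f (y i) - f (x i)| < e.

Definition abs_cont_pos {R : realType} (f : R -> R) : Prop :=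
  forall a b : R, 0 < a -> a <= b -> abs_cont_on f a b.

(* Gamma(u) = int_1^u (p a - p 1) da  (oriented Lebesgue integral) *)
Definition Gamma {R : realType} (p : R -> R) (u : R) : R :=
  if 1 <= u then Rintegral lebesgue_measure `[1, u] (fun a => p a - p 1)
  else - Rintegral lebesgue_measure `[u, 1] (fun a => p a - p 1).

(* closure of I_p, where p0 = lim_{u -> 0+} p u in \bar R:
   [0, +oo) if p0 = -oo, R otherwise *)
Definition Ip_closure {R : realType} (p0 : \bar R) (u : R) : Prop :=
  if p0 is -oo%E then 0 <= u else True.

(* Main.v *)
Require Import Defs.
From HB Require Import structures.
From mathcomp Require Import all_boot all_order all_algebra.
From mathcomp Require Import all_classical all_reals all_analysis.
From mathcomp Require Import ring lra measurable_realfun.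
Import Order.TTheory GRing.Theory Num.Theory.
Import numFieldNormedType.Exports.
Local Open Scope classical_set_scope.
Local Open Scope ring_scope.

Section K.
Context {R : realType}.
Local Notation mu := (@lebesgue_measure R).

Lemma Rint_neg (D : set R) (f : R -> R) : (forall x, D x -> f x <= 0) ->
  - (\int[mu]_(x in D) f x) = fine (\int[mu]_(x in D) (- f x)%:E)%E.
Proof.
move=> f0; rewrite /Rintegral.
rewrite (_ : (\int[mu]_(x in D) (f x)%:E = \int[mu]_(x in D) - (- f x)%:E)%E); last first.
  by apply: eq_integral => x _; rewrite EFinN oppeK.
rewrite integral_ge0N ?fineN ?opprK// => x Dx.
by rewrite lee_fin oppr_ge0 f0.
Qed.

Lemma Rint_le0 (D : set R) (f : R -> R) : (forall x, D x -> f x <= 0) ->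
  0 <= - (\int[mu]_(x in D) f x).
Proof.
move=> H; rewrite Rint_neg // fine_ge0 // integral_ge0 // => x Dx.
by rewrite lee_fin oppr_ge0 H.
Qed.

Lemma key {p : R -> R} {c v : R} : nondecreasing_fun p ->
  (forall x, x <= 0 -> p x = 2 * c - p (- x)) -> c <= p 1 -> 1 <= v ->
  Gamma p v <= Gamma p (- v).
Proof.
move=> ndp pext cp1 v1.
have pneg : forall x, x <= 0 -> p x <= p 1.
  move=> x x0; apply: ndp; exact: (le_trans x0).
rewrite /Gamma v1 ifF; last by apply/negbTE; rewrite -ltNge; lra.
rewrite Rint_neg; last by move=> x /andP[_ x1]; rewrite subr_le0 ndp.
set h := fun x => - (p x - p 1).
have mh (D : set R) : measurable D -> measurable_fun D (EFin \o h).
  move=> mD; apply/measurable_EFinP; apply: nonincreasing_measurable => // x y xy.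
  by rewrite /h lerN2 lerD2r ndp.
have mf (D : set R) : measurable D -> measurable_fun D (EFin \o (fun x => p x - p 1)).
  move=> mD; apply/measurable_EFinP; apply: nondecreasing_measurable => // x y xy.
  by rewrite lerD2r ndp.
have mfN (D : set R) : measurable D -> measurable_fun D (EFin \o (fun x => p (- x) - p 1)).
  move=> mD; apply/measurable_EFinP; apply: nonincreasing_measurable => // x y xy.
  by rewrite lerD2r ndp // lerN2.
have h0 : forall x, [set` `[(- v)%R, 1%R]] x -> (0 <= (h x)%:E)%E.
  by move=> x /= /[!in_itv] /= /andP[_ x1]; rewrite lee_fin /h oppr_ge0 subr_le0 ndp.
have Ifin : (\int[mu]_(x in `[(- v)%R, 1%R]) (h x)%:E < +oo)%E.
  apply: (@le_lt_trans _ _ (\int[mu]_(x in `[(- v)%R, 1%R]) (cst (p 1 - p (- v))%R%:E) x)%E).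
    apply: ge0_le_integral => //. all: try exact: mh.
    by move=> x; rewrite /= in_itv /= => /andP[vx _]; rewrite lee_fin /h opprB lerD2l lerN2 ndp.
  rewrite integral_cst //= lebesgue_measure_itv /= lte_fin.
  have -> : (- v < 1) by lra.
  by rewrite -EFinD -EFinM ltry.
have J0 : (0 <= \int[mu]_(x in `[1%R, v]) (p x - p 1)%:E)%E.
  by apply: integral_ge0 => x /= /[!in_itv] /= /andP[x1 _]; rewrite lee_fin subr_ge0 ndp.
have JN : (\int[mu]_(x in `[1%R, v]) (p x - p 1)%:E =
           \int[mu]_(x in `[(- v)%R, (-1)%R]) (p (- x) - p 1)%:E)%E.
  rewrite (_ : [set` `[(- v)%R, (-1)%R]] = (-%R : R -> R) @^-1` [set` `[1%R, v]]); last first.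
    by rewrite opp_preimage_itvbndbnd.
  pose F := (fun x : R => ((p x - p 1)%R)%:E).
  pose o : measurableTypeR R -> measurableTypeR R := (fun x => (- x)%R).
  have -> : (\int[mu]_(x in o @^-1` [set` `[1%R, v]]) ((p (- x) - p 1)%R)%:E = \int[mu]_(x in o @^-1` [set` `[1%R, v]]) (F \o o) x)%E by [].
  have mo : measurable_fun setT o by exact: oppr_measurable.
  rewrite -(ge0_integral_pushforward mo) //.
  - symmetry; apply: eq_measure_integral => A mA _.
    exact: lebesgue_measureN.
  - apply/measurable_EFinP; apply: nondecreasing_measurable => // x y xy.
    by rewrite lerD2r ndp.
  - by move=> x; rewrite inE /= in_itv /= => /andP[x1 _]; rewrite /F lee_fin subr_ge0 ndp.
have JI : (\int[mu]_(x in `[1%R, v]) (p x - p 1)%:E <= \int[mu]_(x in `[(- v)%R, 1%R]) (h x)%:E)%E.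
  rewrite JN; apply: (@le_trans _ _ (\int[mu]_(x in `[(- v)%R, (-1)%R]) (h x)%:E)%E).
    apply: ge0_le_integral => //; first by move=> x /= /[!in_itv] /= /andP[_ x1]; rewrite lee_fin subr_ge0 ndp // lerNr.
    - exact: mfN.
    - exact: mh.
    move=> x /= /[!in_itv] /= /andP[_ x1]; rewrite lee_fin /h (pext x); [lra|lra].

  apply: ge0_subset_integral => //; first exact: mh.
  by apply: subset_itvl; rewrite bnd_simp; lra.
rewrite /Rintegral fine_le //.
- by rewrite ge0_fin_numE // (le_lt_trans JI).
- by rewrite ge0_fin_numE // (le_trans J0 JI).
Qed.
End K.

Theorem lemma3p3 (R : realType) (eta p : R -> R)
  (eta_cont : {within `[0, +oo[, continuous eta})
  (eta0 : eta 0 = 0)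
  (eta_pos : forall u, 0 < u -> 0 < eta u)
  (eta_mono : {in `[0, +oo[ &, {homo eta : x y / x <= y}})
  (eta_even : forall u, eta (- u) = eta u)
  (p_int : forall b : R, 0 < b ->
     lebesgue_measure.-integrable `[0, b] (fun x => (p x)%:E))
  (p_ac : abs_cont_pos p)
  (p_incr : {in `]0, +oo[ &, {homo p : x y / x < y}})
  (p_infty : p x @[x --> +oo] --> +oo)
  (p0 : \bar R)
  (p_lim0 : (p x)%:E @[x --> 0^'+] --> p0)
  (p_ext : forall c : R, p0 = c%:E -> forall u, u <= 0 -> p u = 2 * c - p (- u))
  (Gamma_growth : Gamma p u / eta u @[u --> +oo] --> +oo) :
  forall eps : R, 0 < eps -> exists C : R,
    forall u : R, Ip_closure p0 u -> eta u <= eps * Gamma p u + C.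
Proof.
move=> eps eps0.
have F1 : forall a b, 0 < a -> a <= b -> p a <= p b.
  move=> a b a0; rewrite le_eqVlt => /predU1P[-> //|ab].
  by apply/ltW/p_incr => //; rewrite in_itv /= andbT //; exact: (lt_trans a0).
have F0 : forall x, 0 < x -> (p0 <= (p x)%:E)%E.
  move=> x x0; apply: (cvge_le _ p_lim0); near=> y.
  rewrite lee_fin; apply: F1; last apply/ltW.
    by near: y; exact: nbhs_right_gt.
  by near: y; exact: nbhs_right_lt.
have G1 : forall u, 1 <= u -> 0 <= Gamma p u.
  move=> u u1; rewrite /Gamma u1; apply: Rintegral_ge0 => x.
  rewrite /= in_itv /= => /andP[x1 _]; rewrite subr_ge0; apply: F1 => //; lra.
have [Gge0 Gneg] : (forall u, Ip_closure p0 u -> 0 <= Gamma p u) /\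
   (forall v, 1 <= v -> Ip_closure p0 (- v) -> Gamma p v <= Gamma p (- v)).
  move: p_ext F0 p_lim0; case: p0 => [c||] pext F0 plim; last first.
  - (* -oo *)
    split; last by move=> v v1 /=; lra.
    move=> u /= u0; have [u1|u1] := leP 1 u; first exact: G1.
    rewrite /Gamma ifF; last by apply/negbTE; rewrite -ltNge.
    have [u0'|u0'] := ltP 0 u.
      apply: Rint_le0 => x /=; rewrite in_itv /= => /andP[ux x1].
      by rewrite subr_le0 F1 //; lra.
    have -> : u = 0 by apply/eqP; rewrite eq_le u0' u0.
    have mp := measurable_int _ (p_int 1 ltr01).
    have mp' : measurable_fun (`]0, 1] : set R) p.
      have mp1 : measurable_fun (`[0, 1] : set R) p by exact/measurable_EFinP.
      by apply: (measurable_funS _ _ mp1) => // x; exact: subset_itv_oc_cc.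
    have -> : \int[lebesgue_measure]_(x in `[0, 1]) (p x - p 1) =
              \int[lebesgue_measure]_(x in `]0, 1]) (p x - p 1).
      rewrite /Rintegral integral_itv_obnd_cbnd //.
      apply/measurable_EFinP; apply: measurable_funB => //.
    apply: Rint_le0 => x /=; rewrite in_itv /= => /andP[x0 x1].
    by rewrite subr_le0 F1.
  - (* +oo *)
    by have := F0 1 ltr01; rewrite leye_eq.
  (* finite *)
  have pc : forall x, 0 <= x -> c <= p x.
    move=> x; rewrite le_eqVlt => /predU1P[<-|x0]; last by rewrite -lee_fin F0.
    by have := pext c erefl 0 (lexx 0); rewrite oppr0; lra.
  have nd : nondecreasing_fun p.
    move=> a b ab; have [a0|a0] := ltP 0 a; first exact: F1.
    have [b0|b0] := ltP 0 b.
      rewrite (pext c erefl a a0); have := pc (- a) ltac:(lra); have := pc b ltac:(lra); lra.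
    rewrite (pext c erefl a a0) (pext c erefl b b0).
    have [b0'|b0'] := ltP (- b) 0; first lra.
    rewrite le_eqVlt in b0'; case/predU1P: b0' => [b0'|b0'].
      rewrite -b0'; have := pc (- a) ltac:(lra); have := pext c erefl 0 (lexx 0); rewrite oppr0; lra.
    have := F1 (- b) (- a) b0' ltac:(lra); lra.
  have cp1 : c <= p 1 by apply: pc.
  split; last by move=> v v1 _; exact: (key nd (pext c erefl) cp1 v1).
  move=> u _; have [u1|u1] := leP 1 u; first exact: G1.
  rewrite /Gamma ifF; last by apply/negbTE; rewrite -ltNge.
  by apply: Rint_le0 => x /=; rewrite in_itv /= => /andP[ux x1]; rewrite subr_le0 nd.
have [M [_ HM]] := proj1 (cvgryPge _) Gamma_growth (eps^-1).
pose M1 := Num.max M 1.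
have M1M : M <= M1 by rewrite le_max lexx.
have M11 : 1 <= M1 by rewrite le_max lexx orbT.
have big : forall u, M1 < u -> eta u <= eps * Gamma p u.
  move=> u uM; have eu : 0 < eta u by apply: eta_pos; lra.
  have := HM u (le_lt_trans M1M uM); rewrite ler_pdivlMr //.
  have ei : eps * eps^-1 = 1 by rewrite mulfV // gt_eqF.
  move=> H; nra.
have eM1 : 0 <= eta M1 by apply/ltW/eta_pos; lra.
have small : forall u, - M1 <= u <= M1 -> eta u <= eta M1.
  move=> u /andP[u1 u2]; have [u0|u0] := leP 0 u.
    by apply: eta_mono; rewrite ?in_itv /= ?andbT; lra.
  by rewrite -eta_even; apply: eta_mono; rewrite ?in_itv /= ?andbT; lra.
exists (eta M1) => u Iu.
have [uM|uM] := ltP M1 u.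
  have := big u uM; lra.
have [uM'|uM'] := leP (- M1) u.
  have := small u ltac:(by rewrite uM' uM); have := Gge0 u Iu.
  move=> g0 e; have : 0 <= eps * Gamma p u by rewrite mulr_ge0 // ltW.
  lra.
have v1 : 1 <= - u by lra.
have := Gneg (- u) v1; rewrite opprK => /(_ Iu) gl.
have := big (- u); rewrite eta_even => /(_ ltac:(lra)) bg.
have : eps * Gamma p (- u) <= eps * Gamma p u by rewrite ler_pM2l.
lra.
Unshelve. all: end_near.
Qed.
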